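(* Let $K$ be a field of characteristic $0$, $S=K[x_1,\ldots,x_n]$, and let $G$ be a finite simple graph on vertex set $[n]$ with edge set $E(G)$. Let $I\subset S$ be the vertex cover ideal of $G$, i.e. the ideal generated by all monomials $\prod_{i\in C}x_i$ with $C\subseteq[n]$ a vertex cover of $G$ (so $I=\bigcap_{\{i,j\}\in E(G)}(x_i,x_j)$), and let $I^{(m)}=\bigcap_{\{i,j\}\in E(G)}(x_i,x_j)^m$. Suppose that $(I^{(2)})^2\subseteq I^3$. Then $(I^{(k-1)})^2\subseteq I^k$ for all $k\ge2$. In particular, for every $k\ge 2$, every homogeneous ideal $J$ with $I^k\subseteq J\subseteq I^{(k)}$ is strongly Golod, i.e. $\partial(J)^2\subseteq J$, where $\partial(J)$ is the ideal generated by all $\partial f/\partial x_i$ with $f\in J$.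
   Context: A vertex cover of $G$ is a subset $C\subseteq[n]$ with $C\cap\{i,j\}\ne\emptyset$ for all edges $\{i,j\}$ of $G$. *)

(* Defs.v *)
From HB Require Import structures.
From mathcomp Require Import all_boot all_algebra.
From mathcomp Require Import multinomials.mpoly.
Set Implicit Arguments. Unset Strict Implicit. Unset Printing Implicit Defensive.
Import GRing.Theory.
Local Open Scope ring_scope.

Definition psubset (K : fieldType) (n : nat) := {mpoly K[n]} -> Prop.

Definition gen_ideal (K : fieldType) (n : nat) (A : psubset K n) : psubset K n :=
  fun f => exists s : seq ({mpoly K[n]} * {mpoly K[n]}),
    (forall p, p \in s -> A p.2) /\ f = \sum_(p <- s) p.1 * p.2.

Definition is_ideal (K : fieldType) (n : nat) (J : psubset K n) : Prop :=
  forall f, gen_ideal J f -> J f.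

Definition is_homogeneous_ideal (K : fieldType) (n : nat) (J : psubset K n) : Prop :=
  is_ideal J /\
  forall f, J f -> gen_ideal (fun h => J h /\ exists d : nat, h \is d.-homog) f.

Definition incl (K : fieldType) (n : nat) (I J : psubset K n) : Prop :=
  forall f, I f -> J f.

Definition ideal_mul (K : fieldType) (n : nat) (I J : psubset K n) : psubset K n :=
  gen_ideal (fun h => exists f g, I f /\ J g /\ h = f * g).

Fixpoint ideal_pow (K : fieldType) (n : nat) (I : psubset K n) (k : nat) : psubset K n :=
  match k with
  | 0 => gen_ideal (fun h => h = 1)
  | k'.+1 => ideal_mul (ideal_pow I k') I
  end.

Definition simple_graph (n : nat) (G : rel 'I_n) : Prop :=
  (forall i j, G i j = G j i) /\ (forall i, G i i = false).

Definition vertex_cover (n : nat) (G : rel 'I_n) (C : {set 'I_n}) : bool :=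
  [forall i, forall j, G i j ==> ((i \in C) || (j \in C))].

Definition cover_ideal (K : fieldType) (n : nat) (G : rel 'I_n) : psubset K n :=
  gen_ideal (fun h => exists C : {set 'I_n},
                 vertex_cover G C /\ h = \prod_(i in C) 'X_i).

Definition symb_power (K : fieldType) (n : nat) (G : rel 'I_n) (m : nat) : psubset K n :=
  fun f => forall i j : 'I_n, G i j ->
    ideal_pow (gen_ideal (fun h : {mpoly K[n]} => h = 'X_i \/ h = 'X_j)) m f.

Definition deriv_ideal (K : fieldType) (n : nat) (J : psubset K n) : psubset K n :=
  gen_ideal (fun h => exists (f : {mpoly K[n]}) (i : 'I_n), J f /\ h = mderiv i f).

Definition strongly_golod (K : fieldType) (n : nat) (J : psubset K n) : Prop :=
  incl (ideal_pow (deriv_ideal J) 2) J.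

Arguments cover_ideal K {n} G.
Arguments symb_power K {n} G m.

(* Main.v *)
Require Import Defs.
From HB Require Import structures.
From mathcomp Require Import all_boot all_algebra.
From mathcomp Require Import multinomials.mpoly.
From mathcomp Require Import zify.
Set Implicit Arguments. Unset Strict Implicit. Unset Printing Implicit Defensive.
Import GRing.Theory.
Local Open Scope ring_scope.

Section Gen.
Variables (K : fieldType) (n : nat).
Implicit Types (A B : psubset K n) (f g h : {mpoly K[n]}).

Lemma gen_single A h : A h -> gen_ideal A h.
Proof. by move=> Ah; exists [:: (1, h)]; split; [move=> p; rewrite inE => /eqP-> | rewrite big_seq1 mul1r]. Qed.

Lemma gen0 A : gen_ideal A 0.
Proof. by exists [::]; rewrite big_nil. Qed.

Lemma genD A f g : gen_ideal A f -> gen_ideal A g -> gen_ideal A (f + g).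
Proof.
move=> [s [Hs ->]] [t [Ht ->]]; exists (s ++ t); split; last by rewrite big_cat.
by move=> p; rewrite mem_cat => /orP[/Hs|/Ht].
Qed.

Lemma genM A f g : gen_ideal A g -> gen_ideal A (f * g).
Proof.
move=> [s [Hs ->]]; exists [seq (f * p.1, p.2) | p <- s]; split.
  by move=> p /mapP[q /Hs Hq ->].
by rewrite big_map big_distrr /=; apply: eq_bigr => p _; rewrite mulrA.
Qed.

Lemma gen_gen A f : gen_ideal (gen_ideal A) f -> gen_ideal A f.
Proof.
move=> [s [Hs ->]]; elim: s Hs => [|p s IH] Hs; first by rewrite big_nil; apply: gen0.
rewrite big_cons; apply: genD; last by apply: IH => q Hq; apply: Hs; rewrite inE Hq orbT.
by apply: genM; apply: Hs; rewrite inE eqxx.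
Qed.

Lemma gen_mono A B f : incl A B -> gen_ideal A f -> gen_ideal B f.
Proof. by move=> AB [s [Hs ->]]; exists s; split=> // p /Hs /AB. Qed.

Lemma pow_closed A k f : gen_ideal (ideal_pow A k) f -> ideal_pow A k f.
Proof. by case: k => [|k] /gen_gen. Qed.

Lemma mul_in A B f g : A f -> B g -> ideal_mul A B (f * g).
Proof. by move=> Af Bg; apply: gen_single; exists f, g. Qed.

Definition SP (P : 'X_{1..n} -> Prop) f := forall m, m \in msupp f -> P m.
Definition upc (P : 'X_{1..n} -> Prop) := forall m m', P m -> P (m + m')%MM.

Lemma SP_gen (P : 'X_{1..n} -> Prop) A : upc P -> incl A (SP P) -> incl (gen_ideal A) (SP P).
Proof.
move=> uP AP f [s [Hs ->]] m /msupp_sum_le /flattenP [ms /mapP [p ps ->]] /msuppM_le.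
move=> /allpairsP [[m1 m2] /= [_ m2s ->]]; rewrite addmC; apply: uP.
rewrite filter_predT in ps; exact: (AP _ (Hs _ ps) _ m2s).
Qed.

Lemma SP_mul (P Q R : 'X_{1..n} -> Prop) f g :
  SP P f -> SP Q g -> (forall a b, P a -> Q b -> R (a + b)%MM) -> SP R (f * g).
Proof.
move=> Pf Qg PQR m /msuppM_le /allpairsP [[m1 m2] /= [m1s m2s ->]].
by apply: PQR; [apply: Pf|apply: Qg].
Qed.

Lemma SP_in (P : 'X_{1..n} -> Prop) A k f :
  (forall m, P m -> ideal_pow A k 'X_[m]) -> SP P f -> ideal_pow A k f.
Proof.
move=> HP Pf; apply: pow_closed.
exists [seq ((f@_m)%:MP, 'X_[m]) | m <- msupp f]; split.
  by move=> p /mapP [m ms ->]; apply: HP; apply: Pf.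
rewrite big_map [LHS](mpolyE f); apply: eq_bigr => m _; by rewrite mul_mpolyC.
Qed.

Lemma SP_X (P : 'X_{1..n} -> Prop) m : SP P 'X_[m] -> P m.
Proof. by apply; rewrite msuppX inE. Qed.

Lemma mdecomp (m a : 'X_{1..n}) : (forall i, a i <= m i)%N -> exists r, m = (a + r)%MM.
Proof.
move=> H; exists (m - a)%MM; apply/mnmP => i; rewrite mnmDE mnmBE.
by rewrite subnKC.
Qed.

End Gen.
Local Close Scope ring_scope.
Section Comb.
Variables (n : nat) (G : rel 'I_n).
Implicit Types (m a b c d u : 'X_{1..n}).

Definition S k m := forall i j, G i j -> k <= m i + m j.
Fixpoint T k m : Prop := match k with
  | 0 => True
  | k'.+1 => exists a (C : {set 'I_n}), T k' a /\ vertex_cover G C /\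
              forall i, a i + (i \in C) <= m i end.

Lemma coverP (C : {set 'I_n}) :
  vertex_cover G C <-> forall i j, G i j -> (i \in C) || (j \in C).
Proof.
split => [/forallP H i j Gij | H].
  by move: (H i) => /forallP /(_ j) /implyP; apply.
by apply/forallP => i; apply/forallP => j; apply/implyP; apply: H.
Qed.

Lemma T_mono k a m : T k a -> (forall i, a i <= m i) -> T k m.
Proof.
case: k => [//|k] [b [C [Tb [cC H]]]] am; exists b, C; do 2!split => //.
by move=> i; apply: leq_trans (H i) (am i).
Qed.

Lemma T_add k l a b : T k a -> T l b -> T (k + l) (a + b)%MM.
Proof.
elim: l b => [|l IH] b Ta.
  by move=> _; rewrite addn0; apply: T_mono Ta _ => i; rewrite mnmDE leq_addr.
move=> [b' [C [Tb' [cC H]]]]; rewrite addnS; exists (a + b')%MM, C; split.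
  exact: IH.
by split => // i; rewrite !mnmDE -addnA leq_add2l.
Qed.

Lemma T_pred k m : T k.+1 m -> T k m.
Proof. by move=> [a [C [Ta [_ H]]]]; apply: T_mono Ta _ => i; apply: leq_trans (H i); apply: leq_addr. Qed.

Lemma T_le k l m : l <= k -> T k m -> T l m.
Proof.
move=> lk; rewrite -(subnK lk); elim: (k - l) => [//|d IH] Tm.
by apply: IH; apply: T_pred.
Qed.

Lemma S_mono k a m : S k a -> (forall i, a i <= m i) -> S k m.
Proof. by move=> Sa am i j Gij; apply: leq_trans (Sa i j Gij) _; apply: leq_add. Qed.

Lemma S_le k l m : l <= k -> S k m -> S l m.
Proof. by move=> lk Sm i j Gij; apply: leq_trans lk (Sm i j Gij). Qed.

Lemma S1_T1 c : S 1 c -> T 1 c.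
Proof.
move=> Sc; exists 0%MM, [set i | 0 < c i]; split => //; split.
  apply/coverP => i j /Sc; rewrite !inE; lia.
by move=> i; rewrite mnm0E inE add0n; case: (c i).
Qed.

Lemma decomp_odd k c : odd k -> S k c -> exists (C : {set 'I_n}) d,
  vertex_cover G C /\ S k.-1 d /\ forall i, d i + (i \in C) <= c i.
Proof.
move=> ok Sc; pose C := [set i | k <= (c i).*2].
exists C, [multinom c i - (i \in C) | i < n]; split; last split.
- apply/coverP => i j /Sc; rewrite !inE; lia.
- move=> i j /Sc; rewrite !mnmE !inE.
  case: (leqP k (c i).*2) => hi; case: (leqP k (c j).*2) => hj /=;
    rewrite ?subn0 ?subn1; move: ok; rewrite -[odd k]negbK -dvdn2 => /negP ok;
    [|lia|lia|lia].
  have hi' : k < (c i).*2 by rewrite ltn_neqAle hi andbT; apply/negP => /eqP Ek; apply: ok; rewrite Ek -muln2 dvdn_mull.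
  have hj' : k < (c j).*2 by rewrite ltn_neqAle hj andbT; apply/negP => /eqP Ek; apply: ok; rewrite Ek -muln2 dvdn_mull.
  lia.
- move=> i; rewrite mnmE !inE; case: (leqP k (c i).*2) => h /=; last by rewrite subn0 addn0.
  have k0 : 0 < k by rewrite lt0n; apply/negP => /eqP k0; rewrite k0 in ok.
  lia.
Qed.

Lemma decomp_even k c : ~~ odd k -> 2 <= k -> S k c -> exists u d,
  S 2 u /\ S (k - 2) d /\ forall i, u i + d i <= c i.
Proof.
move=> ek k2 Sc; pose f i := if k < (c i).*2 then 2 else if k == (c i).*2 then 1 else 0.
have k2E : k = (k./2).*2 by rewrite -[LHS]odd_double_half (negbTE ek).
exists [multinom f i | i < n], [multinom c i - f i | i < n]; split; last split.
- move=> i j /Sc; rewrite !mnmE /f.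
  case: (ltnP k (c i).*2) => hi; case: (ltnP k (c j).*2) => hj //=;
  case: (@eqP _ k (c i).*2) => hi2; case: (@eqP _ k (c j).*2) => hj2 //=; lia.
- move=> i j /Sc; rewrite !mnmE /f.
  case: (ltnP k (c i).*2) => hi; case: (ltnP k (c j).*2) => hj //=;
  case: (@eqP _ k (c i).*2) => hi2; case: (@eqP _ k (c j).*2) => hj2 //=; lia.
- move=> i; rewrite !mnmE /f.
  case: (ltnP k (c i).*2) => hi; case: (@eqP _ k (c i).*2) => hi2 //=; lia.
Qed.

Hypothesis H3 : forall u v, S 2 u -> S 2 v -> T 3 (u + v)%MM.

Lemma Qmain k : 1 <= k -> forall c1 c2, S k c1 -> S k c2 -> T k.+1 (c1 + c2)%MM.
Proof.
elim/ltn_ind: k => k IH m1 c1 c2 S1 S2.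
case: k IH m1 S1 S2 => [//|[|[|k]]] IH _ S1 S2.
- by apply: (@T_add 1 1); apply: S1_T1.
- exact: H3.
case/boolP: (odd k.+3) => om.
- have [C1 [d1 [cC1 [Sd1 H1]]]] := decomp_odd om S1.
  have [C2 [d2 [cC2 [Sd2 H2]]]] := decomp_odd om S2.
  have Td := IH k.+2 (ltnSn _) isT d1 d2 Sd1 Sd2.
  exists (d1 + d2)%MM, C1; split; first exact: Td.
  split => // i; rewrite !mnmDE; move: (H1 i) (H2 i); lia.
- have [u1 [d1 [Su1 [Sd1 H1]]]] := decomp_even om isT S1.
  have [u2 [d2 [Su2 [Sd2 H2]]]] := decomp_even om isT S2.
  rewrite subn2 /= in Sd1 Sd2.
  have Td : T k.+2 (d1 + d2)%MM.
    by apply: (IH k.+1) => //; rewrite ltnS; apply: leq_trans (leqnSn _) (leqnSn _).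
  have Tu := H3 Su1 Su2.
  have TT : T k.+4 ((u1 + u2) + (d1 + d2))%MM.
    by apply: (T_le _ (T_add Tu Td)); lia.
  apply: T_mono TT _ => i; rewrite !mnmDE; move: (H1 i) (H2 i); lia.
Qed.

End Comb.

Section Link.
Variables (K : fieldType) (n : nat) (G : rel 'I_n).
Local Open Scope ring_scope.

Definition E (i j : 'I_n) : psubset K n :=
  gen_ideal (fun h : {mpoly K[n]} => h = 'X_i \/ h = 'X_j).
Definition Pe k (i j : 'I_n) (m : 'X_{1..n}) := (k <= m i + m j)%N.

Lemma upc_Pe k i j : upc (Pe k i j).
Proof. by move=> m m'; rewrite /Pe !mnmDE => h; apply: leq_trans h _; apply: leq_add; apply: leq_addr. Qed.

Lemma E_SP i j : incl (E i j) (SP (Pe 1 i j)).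
Proof.
apply: SP_gen; first exact: upc_Pe.
by move=> h [->|->] m; rewrite msuppX inE => /eqP ->; rewrite /Pe !mnm1E eqxx ?addn1 ?add1n.
Qed.

Lemma powE_SP i j k : incl (ideal_pow (E i j) k) (SP (Pe k i j)).
Proof.
elim: k => [|k IH] f; first by move=> _ m _; rewrite /Pe.
apply: SP_gen; first exact: upc_Pe.
move=> h [f1 [g [Hf [Hg ->]]]]; apply: SP_mul (IH _ Hf) (E_SP Hg) _.
by move=> a b; rewrite /Pe !mnmDE; lia.
Qed.

Lemma X_in_powE i j k (m : 'X_{1..n}) : i != j -> Pe k i j m -> ideal_pow (E i j) k 'X_[m].
Proof.
move=> ij; elim: k m => [|k IH] m Pm.
  by rewrite -[X in ideal_pow _ _ X]mulr1; apply: genM; apply: gen_single.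
have [mi|mj] : (0 < m i \/ 0 < m j)%N by move: Pm; rewrite /Pe; lia.
- have [r mE] : exists r, m = (U_(i) + r)%MM by apply: mdecomp => l; rewrite mnm1E; case: eqP => // <-.
  rewrite mE in Pm *; rewrite addmC mpolyXD; apply: mul_in; last by apply: gen_single; left.
  apply: IH; move: Pm; rewrite /Pe !mnmDE !mnm1E eqxx (negbTE ij); lia.
- have [r mE] : exists r, m = (U_(j) + r)%MM by apply: mdecomp => l; rewrite mnm1E; case: eqP => // <-.
  rewrite mE in Pm *; rewrite addmC mpolyXD; apply: mul_in; last by apply: gen_single; right.
  apply: IH; move: Pm; rewrite /Pe !mnmDE !mnm1E eqxx eq_sym (negbTE ij); lia.
Qed.

Lemma symb_SP k : incl (symb_power K G k) (SP (S G k)).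
Proof. by move=> f Hf m ms i j Gij; apply: (powE_SP (Hf i j Gij)). Qed.

Lemma S_symb k m : simple_graph G -> S G k m -> symb_power K G k 'X_[m].
Proof.
move=> [_ irr] Sm i j Gij; apply: X_in_powE; last exact: Sm.
by apply/eqP => eij; move: Gij; rewrite eij irr.
Qed.

Lemma cE (C : {set 'I_n}) i : (\sum_(x in C) U_(x))%MM i = (i \in C) :> nat.
Proof.
rewrite mnm_sumE; case: (boolP (i \in C)) => iC.
  rewrite (bigD1 i) //= mnm1E eqxx big1 // => x /andP [_ xi].
  by rewrite mnm1E (negbTE xi).
by rewrite big1 // => x xC; rewrite mnm1E; case: eqP => // xi; rewrite -xi xC in iC.
Qed.

Lemma prodX_cover (C : {set 'I_n}) : \prod_(i in C) ('X_i : {mpoly K[n]}) = 'X_[\sum_(x in C) U_(x)].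
Proof. by rewrite mprodXE. Qed.

Lemma upc_T k : upc (T G k).
Proof. by move=> m m' Tm; apply: T_mono Tm _ => i; rewrite mnmDE leq_addr. Qed.

Lemma cover_SP : incl (cover_ideal K G) (SP (T G 1)).
Proof.
apply: SP_gen; first exact: upc_T.
move=> h [C [cC ->]] m; rewrite prodX_cover msuppX inE => /eqP ->.
by exists 0%MM, C; do 2!split => //; move=> i; rewrite mnm0E cE.
Qed.

Lemma powcover_SP k : incl (ideal_pow (cover_ideal K G) k) (SP (T G k)).
Proof.
elim: k => [|k IH] f; first by move=> _ m _.
apply: SP_gen; first exact: upc_T.
move=> h [f1 [g [Hf [Hg ->]]]]; apply: SP_mul (IH _ Hf) (cover_SP Hg) _.
by move=> a b Ta Tb; rewrite -addn1; apply: T_add.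
Qed.

Lemma T_in_powcover k m : T G k m -> ideal_pow (cover_ideal K G) k 'X_[m].
Proof.
elim: k m => [|k IH] m.
  by move=> _; rewrite -[X in ideal_pow _ _ X]mulr1; apply: genM; apply: gen_single.
move=> [a [C [Ta [cC H]]]].
have [r ->] : exists r, m = ((a + \sum_(x in C) U_(x)) + r)%MM.
  by apply: mdecomp => i; rewrite mnmDE cE.
have -> : ((a + \sum_(x in C) U_(x)) + r = (r + a) + \sum_(x in C) U_(x))%MM.
  by apply/mnmP => i; rewrite !mnmDE; lia.
rewrite mpolyXD; apply: mul_in.
  by rewrite mpolyXD; apply: pow_closed; apply: genM; apply: gen_single; apply: IH.
by apply: gen_single; exists C; split => //; rewrite prodX_cover.
Qed.

Lemma upc_S k : upc (S G k).
Proof. by move=> m m' Sm; apply: S_mono Sm _ => i; rewrite mnmDE leq_addr. Qed.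

Lemma main_incl k (X : psubset K n) :
  (forall u v, S G 2 u -> S G 2 v -> T G 3 (u + v)%MM) ->
  (2 <= k)%N -> incl X (SP (S G k.-1)) ->
  incl (ideal_pow X 2) (ideal_pow (cover_ideal K G) k).
Proof.
move=> H3 k2 XS f Hf; apply: (SP_in (P := T G k)); first exact: T_in_powcover.
move: f Hf; apply: SP_gen; first exact: upc_T.
move=> h [f1 [g [Hf1 [Hg ->]]]].
apply: (SP_mul (P := S G k.-1) (Q := S G k.-1)); last first.
- move=> a b Sa Sb.
  have := Qmain H3 (_ : (1 <= k.-1)%N) Sa Sb; rewrite prednK; last by lia.
  by apply; lia.
- exact: XS.
- move: f1 Hf1; apply: SP_gen; first exact: upc_S.
  move=> h' [f0 [g0 [_ [Hg0 ->]]]].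
  apply: (SP_mul (P := fun _ => True) (Q := S G k.-1)); first by move=> ? _.
    exact: XS.
  by move=> a b _ Sb; rewrite addmC; apply: upc_S.
Qed.

End Link.

Local Open Scope ring_scope.

Lemma deriv_SP (K : fieldType) (n : nat) (G : rel 'I_n) k (J : psubset K n) :
  simple_graph G -> incl J (symb_power K G k) ->
  incl (deriv_ideal J) (SP (S G k.-1)).
Proof.
move=> [_ irr] JS; apply: SP_gen; first exact: upc_S.
move=> h [f [i [Jf ->]]] m ms a b Gab.
have ab : a != b by apply/eqP => eab; move: Gab; rewrite eab irr.
have : (m + U_(i))%MM \in msupp f.
  apply: (contraLR _ ms); rewrite -!mcoeff_eq0 => /eqP H.
  by rewrite mcoeff_deriv H mul0rn.
move=> /(symb_SP (JS _ Jf)) /(_ a b Gab); rewrite !mnmDE !mnm1E.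
have : ((i == a) + (i == b) <= 1)%N.
  by case: (i =P a) => [ia|]; case: (i =P b) => [ib|] //; rewrite -ia -ib eqxx in ab.
lia.
Qed.

Theorem proposition2p8 (K : fieldType) (n : nat) (G : rel 'I_n) :
  [pchar K] =i pred0 ->
  simple_graph G ->
  incl (ideal_pow (symb_power K G 2) 2) (ideal_pow (cover_ideal K G) 3) ->
  (forall k : nat, (2 <= k)%N ->
     incl (ideal_pow (symb_power K G k.-1) 2) (ideal_pow (cover_ideal K G) k)) /\
  (forall k : nat, (2 <= k)%N -> forall J : psubset K n,
     is_homogeneous_ideal J ->
     incl (ideal_pow (cover_ideal K G) k) J ->
     incl J (symb_power K G k) ->
     strongly_golod J).
Proof.
move=> _ sG Hyp.
have H3 : forall u v, S G 2 u -> S G 2 v -> T G 3 (u + v)%MM.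
  move=> u v Su Sv.
  have : ideal_pow (symb_power K G 2) 2 ('X_[u] * 'X_[v]).
    apply: mul_in; last exact: S_symb.
    rewrite -[X in ideal_mul _ _ X]mul1r; apply: mul_in; last exact: S_symb.
    exact: gen_single.
  move=> /Hyp /powcover_SP; rewrite -mpolyXD; exact: SP_X.
split.
  move=> k k2; apply: main_incl => //; exact: symb_SP.
move=> k k2 J _ IJ JS f Hf; apply: IJ.
apply: (main_incl H3 k2 _ Hf); exact: deriv_SP.
Qed.
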